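(* Let $n\geq 1$ and $x_1,\dots,x_n\in(0,\tfrac12]$. With $A_n,G_n,A'_n,G'_n$ as defined in the context, $$\left(\frac{A'_n}{G'_n}\right)^{A'_n+G'_n}\leq \left(\frac{A_n}{G_n}\right)^{A_n+G_n} \qquad\text{and}\qquad \left(\frac{A'_n}{G'_n}\right)^{A_n-G_n}\leq \left(\frac{A_n}{G_n}\right)^{A'_n-G'_n},$$ with equality in each if and only if $x_1=\cdots=x_n$.
   Context: $A_n=\frac1n\sum_{i=1}^n x_i$ and $G_n=\prod_{i=1}^n x_i^{1/n}$ are the arithmetic and geometric means of $x_1,\dots,x_n$; $A'_n=\frac1n\sum_{i=1}^n(1-x_i)$ and $G'_n=\prod_{i=1}^n(1-x_i)^{1/n}$ are the arithmetic and geometric means of $1-x_1,\dots,1-x_n$. *)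

(* Defs.v *)
From Stdlib Require Import Reals.
Open Scope R_scope.

Fixpoint fsum (n : nat) (f : nat -> R) : R :=
  match n with O => 0 | S m => fsum m f + f m end.

Fixpoint fprod (n : nat) (f : nat -> R) : R :=
  match n with O => 1 | S m => fprod m f * f m end.

Definition AM (n : nat) (x : nat -> R) : R := fsum n x / INR n.
Definition GM (n : nat) (x : nat -> R) : R := Rpower (fprod n x) (/ INR n).

Definition compl (x : nat -> R) : nat -> R := fun i => 1 - x i.

(* Main.v *)
Require Import Defs.
From Stdlib Require Import Reals Lra Lia Psatz Classical.
From Coquelicot Require Import Coquelicot.
Open Scope R_scope.

Lemma fsum_ext n f g : (forall i, (i < n)%nat -> f i = g i) -> fsum n f = fsum n g.
Proof. induction n; simpl; intros H; [reflexivity|].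
  rewrite IHn by (intros; apply H; lia). rewrite H by lia. reflexivity. Qed.

Lemma fsum_plus n f g : fsum n (fun i => f i + g i) = fsum n f + fsum n g.
Proof. induction n; simpl; [lra|]. rewrite IHn; lra. Qed.

Lemma fsum_minus n f g : fsum n (fun i => f i - g i) = fsum n f - fsum n g.
Proof. induction n; simpl; [lra|]. rewrite IHn; lra. Qed.

Lemma fsum_scal n c f : fsum n (fun i => c * f i) = c * fsum n f.
Proof. induction n; simpl; [lra|]. rewrite IHn; lra. Qed.

Lemma fsum_const n c : fsum n (fun _ => c) = INR n * c.
Proof. induction n; simpl fsum; [simpl; lra|]. rewrite IHn, S_INR; lra. Qed.

Lemma fsum_le n f g : (forall i, (i<n)%nat -> f i <= g i) -> fsum n f <= fsum n g.
Proof. induction n; simpl; intros H; [lra|].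
  apply Rplus_le_compat; [apply IHn; intros; apply H; lia | apply H; lia]. Qed.

Lemma fsum_lt n f g j : (j < n)%nat -> (forall i, (i<n)%nat -> f i <= g i) ->
  f j < g j -> fsum n f < fsum n g.
Proof. induction n; intros Hj H Hs; [lia|]. simpl.
  destruct (Nat.eq_dec j n) as [->|Hne].
  - apply Rplus_le_lt_compat; [apply fsum_le; intros; apply H; lia | auto].
  - apply Rplus_lt_le_compat; [apply IHn; auto; try lia; intros; apply H; lia | apply H; lia].
Qed.

Lemma fprod_ln n f : (forall i, (i<n)%nat -> 0 < f i) ->
  0 < fprod n f /\ ln (fprod n f) = fsum n (fun i => ln (f i)).
Proof. induction n; simpl; intros H.
  - split; [lra| apply ln_1].
  - destruct IHn as [H1 H2]; [intros; apply H; lia|].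
    assert (0 < f n) by (apply H; lia).
    split; [nra|]. rewrite ln_mult by auto. rewrite H2. reflexivity.
Qed.

Lemma GM_eq n x : (forall i, (i<n)%nat -> 0 < x i) ->
  GM n x = exp (/ INR n * fsum n (fun i => ln (x i))).
Proof. intros H. unfold GM, Rpower. destruct (fprod_ln n x H) as [_ ->]. reflexivity. Qed.

Lemma ln_lt_lin y p : 0 < y -> 0 < p -> y <> p -> ln y < ln p + (y - p)/p.
Proof. intros Hy Hp Hne.
  assert (Hq : ln y - ln p <> 0).
  { intro E. apply Hne. apply ln_inv; auto; lra. }
  pose proof (exp_ineq1 _ Hq) as E.
  unfold Rminus in E. rewrite exp_plus, exp_Ropp, !exp_ln in E by auto.
  assert (E2 : p * (1 + (ln y + - ln p)) < p * (y * / p)) by (apply Rmult_lt_compat_l; auto).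
  replace (p * (y * / p)) with y in E2 by (field; lra).
  replace ((y - p)/p) with (y/p - 1) by (field; lra).
  assert (ln y - ln p < y/p - 1); [|lra].
  apply (Rmult_lt_reg_l p); auto. replace (p * (y/p - 1)) with (y - p) by (field; lra). lra.
Qed.

Lemma ln_le_lin y p : 0 < y -> 0 < p -> ln y <= ln p + (y - p)/p.
Proof. intros Hy Hp. destruct (Req_dec y p) as [->|Hne].
  - replace ((p-p)/p) with 0 by (field; lra). lra.
  - left. apply ln_lt_lin; auto. Qed.

Lemma exp_le_exp a b : a <= b -> exp a <= exp b.
Proof. intros [H|H]; [left; apply exp_increasing; auto| subst; lra]. Qed.

Lemma fsum_pos n v : (1 <= n)%nat -> (forall i, (i<n)%nat -> 0 < v i) -> 0 < fsum n v.
Proof. intros Hn Hv. replace 0 with (fsum n (fun _ => 0)).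
  - apply (fsum_lt n _ _ 0%nat); try lia; intros; [left|]; apply Hv; lia.
  - rewrite fsum_const; lra. Qed.

Lemma amgm_gen n v : (1 <= n)%nat -> (forall i, (i<n)%nat -> 0 < v i) ->
  exp (/ INR n * fsum n (fun i => ln (v i))) <= / INR n * fsum n v /\
  ((exists i j, (i<n)%nat /\ (j<n)%nat /\ v i <> v j) ->
    exp (/ INR n * fsum n (fun i => ln (v i))) < / INR n * fsum n v).
Proof. intros Hn Hv.
  assert (HN : 0 < INR n) by (apply lt_0_INR; lia).
  set (A := / INR n * fsum n v).
  assert (HA : 0 < A).
  { unfold A. apply Rmult_lt_0_compat; [apply Rinv_0_lt_compat; auto| apply fsum_pos; auto]. }
  assert (Hsum : fsum n (fun i => ln A + (v i - A)/A) = INR n * ln A).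
  { rewrite fsum_plus, fsum_const.
    replace (fsum n (fun i => (v i - A)/A)) with (fsum n (fun i => /A * v i - 1)).
    - rewrite fsum_minus, fsum_scal, fsum_const.
      assert (E : fsum n v = INR n * A) by (unfold A; field; lra).
      rewrite E. field. lra.
    - apply fsum_ext. intros. field. lra. }
  assert (Hfin : forall S, S <= INR n * ln A -> exp (/ INR n * S) <= A).
  { intros S HS. rewrite <- (exp_ln A) by auto. apply exp_le_exp.
    apply (Rmult_le_reg_l (INR n)); auto. rewrite <- Rmult_assoc, Rinv_r by lra. lra. }
  assert (Hfin2 : forall S, S < INR n * ln A -> exp (/ INR n * S) < A).
  { intros S HS. rewrite <- (exp_ln A) by auto. apply exp_increasing.
    apply (Rmult_lt_reg_l (INR n)); auto. rewrite <- Rmult_assoc, Rinv_r by lra. lra. }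
  split.
  - apply Hfin. rewrite <- Hsum. apply fsum_le. intros. apply ln_le_lin; auto.
  - intros [i [j [Hi [Hj Hne]]]].
    assert (exists k, (k < n)%nat /\ v k <> A) as [k [Hk HkA]].
    { destruct (Req_dec (v i) A); [exists j | exists i]; split; auto. intro; apply Hne; congruence. }
    apply Hfin2. rewrite <- Hsum. apply (fsum_lt n _ _ k); auto.
    + intros. apply ln_le_lin; auto.
    + apply ln_lt_lin; auto.
Qed.

Lemma cheb_inner n f g a b : fsum n (fun j => (a - f j)*(b - g j)) =
  INR n*a*b - a*fsum n g - b*fsum n f + fsum n (fun j => f j * g j).
Proof. induction n; simpl fsum; [simpl; ring|]. rewrite IHn, S_INR. ring. Qed.

Lemma cheb_outer m f g c B C D : fsum m (fun i => c*(f i*g i) - f i*B - g i*C + D) =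
  c*fsum m (fun i => f i * g i) - fsum m f * B - fsum m g * C + INR m * D.
Proof. induction m; simpl fsum; [simpl; ring|]. rewrite IHm, S_INR. ring. Qed.

Lemma cheb n f g : (forall i j, (i<n)%nat -> (j<n)%nat -> 0 <= (f i - f j)*(g i - g j)) ->
  fsum n f * fsum n g <= INR n * fsum n (fun i => f i * g i).
Proof. intros H.
  assert (0 <= fsum n (fun i => fsum n (fun j => (f i - f j)*(g i - g j)))).
  { replace 0 with (fsum n (fun _ => 0)) by (rewrite fsum_const; ring).
    apply fsum_le. intros i Hi.
    replace 0 with (fsum n (fun _ => 0)) by (rewrite fsum_const; ring).
    apply fsum_le. intros j Hj. apply H; auto. }
  rewrite (fsum_ext n _ (fun i => INR n*(f i*g i) - f i*fsum n g - g i*fsum n f + fsum n (fun j => f j * g j))) in H0.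
  - rewrite cheb_outer in H0. lra.
  - intros i Hi. rewrite cheb_inner. ring.
Qed.

Lemma two_term a b T : 0 <= a -> 0 <= b -> 0 <= T -> a * b = T * T -> 2 * T <= a + b.
Proof. intros Ha Hb HT E.
  destruct (Rle_dec (2*T) (a+b)) as [|Hn]; auto. exfalso.
  assert (H1 : (a + b - 2*T) * (a + b + 2*T) = (a - b)*(a - b)) by (rewrite <- (Rmult_1_l (a*b)) in E; nra).
  assert (H2 : (a + b - 2*T) * (a + b + 2*T) < 0).
  { apply Rmult_neg_pos; lra. }
  pose proof (Rle_0_sqr (a - b)). unfold Rsqr in *. lra. Qed.

Lemma core n k t : (1 <= n)%nat -> (forall i, (i<n)%nat -> 0 <= k i) -> 0 <= t ->
  (forall i, (i<n)%nat -> 0 < 1/2 - t * k i) ->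
  2 * (/ INR n * fsum n k) <=
    exp (/ INR n * fsum n (fun i => ln (1/2 + t * k i))) * (/ INR n * fsum n (fun i => k i / (1/2 + t * k i)))
  + exp (/ INR n * fsum n (fun i => ln (1/2 - t * k i))) * (/ INR n * fsum n (fun i => k i / (1/2 - t * k i)))
  /\ (0 < t -> (exists i j, (i<n)%nat /\ (j<n)%nat /\ k i <> k j) ->
   2 * (/ INR n * fsum n k) <
    exp (/ INR n * fsum n (fun i => ln (1/2 + t * k i))) * (/ INR n * fsum n (fun i => k i / (1/2 + t * k i)))
  + exp (/ INR n * fsum n (fun i => ln (1/2 - t * k i))) * (/ INR n * fsum n (fun i => k i / (1/2 - t * k i)))).
Proof.
  intros Hn Hk Ht Hm.
  assert (HN : 0 < INR n) by (apply lt_0_INR; lia).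
  assert (Hp : forall i, (i<n)%nat -> 0 < 1/2 + t * k i).
  { intros i Hi. specialize (Hk i Hi). nra. }
  set (Qp := exp (/ INR n * fsum n (fun i => ln (1/2 + t * k i)))).
  set (Qm := exp (/ INR n * fsum n (fun i => ln (1/2 - t * k i)))).
  set (lw := fun i => (ln (1/2 + t * k i) + ln (1/2 - t * k i)) / 2).
  set (w := fun i => exp (lw i)).
  set (g := exp (/ INR n * fsum n lw)).
  assert (Hw2 : forall i, (i<n)%nat -> w i * w i = (1/2 + t * k i) * (1/2 - t * k i)).
  { intros i Hi. unfold w. rewrite <- exp_plus. unfold lw.
    replace ((ln (1 / 2 + t * k i) + ln (1 / 2 - t * k i)) / 2 +
             (ln (1 / 2 + t * k i) + ln (1 / 2 - t * k i)) / 2)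
      with (ln (1 / 2 + t * k i) + ln (1 / 2 - t * k i)) by field.
    rewrite exp_plus, !exp_ln; auto. }
  assert (Hwpos : forall i, 0 < w i) by (intros; apply exp_pos).
  assert (Hg2 : g * g = Qp * Qm).
  { unfold g, Qp, Qm. rewrite <- !exp_plus. f_equal.
    unfold lw. rewrite (fsum_ext n _ (fun i => /2 * ln (1 / 2 + t * k i) + /2 * ln (1 / 2 - t * k i)))
      by (intros; field). rewrite fsum_plus, !fsum_scal. field. lra. }
  assert (Hgpos : 0 < g) by apply exp_pos.
  assert (Hterm : forall i, (i<n)%nat ->
     2 * (g * (k i * / w i)) <= Qp * (k i / (1/2 + t * k i)) + Qm * (k i / (1/2 - t * k i))).
  { intros i Hi. pose proof (Hk i Hi). pose proof (Hp i Hi). pose proof (Hm i Hi).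
    pose proof (Hwpos i). pose proof (Hw2 i Hi).
    apply two_term.
    - unfold Qp. apply Rmult_le_pos; [left; apply exp_pos|]. apply Rmult_le_pos; auto. left; apply Rinv_0_lt_compat; auto.
    - unfold Qm. apply Rmult_le_pos; [left; apply exp_pos|]. apply Rmult_le_pos; auto. left; apply Rinv_0_lt_compat; auto.
    - apply Rmult_le_pos; [lra|]. apply Rmult_le_pos; auto. left; apply Rinv_0_lt_compat; auto.
    - replace (Qp * (k i / (1 / 2 + t * k i)) * (Qm * (k i / (1 / 2 - t * k i))))
        with ((Qp * Qm) * (k i * k i) / ((1 / 2 + t * k i) * (1 / 2 - t * k i))) by (field; lra).
      rewrite <- Hg2, <- H3. field. lra. }
  assert (Hsum1 : 2 * (g * (/ INR n * fsum n (fun i => k i * / w i))) <=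
    Qp * (/ INR n * fsum n (fun i => k i / (1/2 + t * k i))) + Qm * (/ INR n * fsum n (fun i => k i / (1/2 - t * k i)))).
  { replace (Qp * (/ INR n * fsum n (fun i => k i / (1/2 + t * k i))) + Qm * (/ INR n * fsum n (fun i => k i / (1/2 - t * k i))))
      with (/ INR n * fsum n (fun i => Qp * (k i / (1/2 + t * k i)) + Qm * (k i / (1/2 - t * k i))))
      by (rewrite fsum_plus, !fsum_scal; ring).
    replace (2 * (g * (/ INR n * fsum n (fun i : nat => k i * / w i)))) with
      (/ INR n * fsum n (fun i => 2 * (g * (k i * / w i)))) by (rewrite !fsum_scal; ring).
    apply Rmult_le_compat_l; [left; apply Rinv_0_lt_compat; auto|]. apply fsum_le. auto. }
  assert (Hch : fsum n k * fsum n (fun i => / w i) <= INR n * fsum n (fun i => k i * / w i)).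
  { apply cheb. intros i j Hi Hj.
    pose proof (Hk i Hi). pose proof (Hk j Hj). pose proof (Hwpos i). pose proof (Hwpos j).
    pose proof (Hw2 i Hi). pose proof (Hw2 j Hj).
    assert (E : (k i - k j) * (w j - w i) * (w i + w j) = t*t*((k i - k j)*(k i - k j))*(k i + k j)).
    { transitivity ((k i - k j) * (w j * w j - w i * w i)); [ring|]. rewrite H3, H4. ring. }
    assert (0 <= (k i - k j) * (w j - w i)).
    { apply (Rmult_le_reg_r (w i + w j)); [lra|]. rewrite E, Rmult_0_l.
      apply Rmult_le_pos; [|lra]. apply Rmult_le_pos; apply Rle_0_sqr. }
    replace ((k i - k j) * (/ w i - / w j)) with ((k i - k j) * (w j - w i) * / (w i * w j)) by (field; lra).
    apply Rmult_le_pos; auto. left; apply Rinv_0_lt_compat; nra. }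
  assert (Hv : forall i, (i<n)%nat -> 0 < / w i) by (intros; apply Rinv_0_lt_compat; auto).
  destruct (amgm_gen n (fun i => / w i) Hn Hv) as [Ham Hams].
  assert (Hlv : exp (/ INR n * fsum n (fun i => ln (/ w i))) = / g).
  { rewrite (fsum_ext n _ (fun i => -1 * lw i)).
    - rewrite fsum_scal. unfold g. replace (/ INR n * (-1 * fsum n lw)) with (- (/ INR n * fsum n lw)) by ring.
      apply exp_Ropp.
    - intros i Hi. unfold w. rewrite ln_Rinv by apply exp_pos. rewrite ln_exp. ring. }
  rewrite Hlv in Ham, Hams.
  assert (Hk0 : 0 <= / INR n * fsum n k).
  { apply Rmult_le_pos; [left; apply Rinv_0_lt_compat; auto|].
    replace 0 with (fsum n (fun _ => 0)) by (rewrite fsum_const; ring). apply fsum_le; auto. }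
  assert (Hmid : (/ INR n * fsum n k) * (/ INR n * fsum n (fun i => / w i)) <= / INR n * fsum n (fun i => k i * / w i)).
  { apply (Rmult_le_reg_l (INR n)); auto.
    replace (INR n * (/ INR n * fsum n k * (/ INR n * fsum n (fun i : nat => / w i))))
      with (/ INR n * (fsum n k * fsum n (fun i => / w i))) by (field; lra).
    replace (INR n * (/ INR n * fsum n (fun i : nat => k i * / w i))) with
      (/ INR n * (INR n * fsum n (fun i : nat => k i * / w i))) by (field; lra).
    apply Rmult_le_compat_l; auto. left; apply Rinv_0_lt_compat; auto. }
  set (K := / INR n * fsum n k) in *.
  set (X := / INR n * fsum n (fun i : nat => / w i)) in *.
  set (Y := / INR n * fsum n (fun i : nat => k i * / w i)) in *.
  assert (HY : K * X <= Y) by exact Hmid.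
  assert (HgY : 0 <= g * (Y - K * X)) by (apply Rmult_le_pos; lra).
  split.
  - assert (H1 : 1 <= g * X).
    { replace 1 with (g * / g) by (field; lra). apply Rmult_le_compat_l; lra. }
    assert (0 <= K * (g * X - 1)) by (apply Rmult_le_pos; lra).
    lra.
  - intros Htp [i [j [Hi [Hj Hne]]]].
    assert (Hk1 : 0 < K).
    { unfold K. apply Rmult_lt_0_compat; [apply Rinv_0_lt_compat; auto|].
      assert (exists l, (l < n)%nat /\ 0 < k l) as [l [Hl Hkl]].
      { destruct (Req_dec (k i) 0); [exists j| exists i]; split; auto.
        - pose proof (Hk j Hj). destruct H0; auto. exfalso; apply Hne; congruence.
        - pose proof (Hk i Hi). lra. }
      replace 0 with (fsum n (fun _ => 0)) by (rewrite fsum_const; ring).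
      apply (fsum_lt n _ _ l); auto. }
    assert (Hvne : / w i <> / w j).
    { intro E. apply Hne. assert (w i = w j).
      { rewrite <- (Rinv_inv (w i)), <- (Rinv_inv (w j)), E; reflexivity. }
      pose proof (Hw2 i Hi) as Ei. pose proof (Hw2 j Hj) as Ej. rewrite H in Ei.
      pose proof (Hk i Hi). pose proof (Hk j Hj).
      assert (t * t * (k i * k i - k j * k j) = 0) by nra.
      assert (k i * k i - k j * k j = 0).
      { apply Rmult_integral in H2. destruct H2; auto. nra. }
      nra. }
    specialize (Hams (ex_intro _ i (ex_intro _ j (conj Hi (conj Hj Hvne))))).
    assert (H1 : 1 < g * X).
    { replace 1 with (g * / g) by (field; lra). apply Rmult_lt_compat_l; lra. }
    assert (0 < K * (g * X - 1)) by (apply Rmult_lt_0_compat; lra).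
    lra.
Qed.

Lemma der_sum_ln n a b t : (forall i, (i<n)%nat -> 0 < a i + t * b i) ->
  is_derive (fun s => fsum n (fun i => ln (a i + s * b i))) t (fsum n (fun i => b i / (a i + t * b i))).
Proof. induction n; intros H; simpl.
  - auto_derive; auto.
  - apply (is_derive_plus (fun s => fsum n (fun i => ln (a i + s * b i))) (fun s => ln (a n + s * b n))).
    + apply IHn. intros; apply H; lia.
    + assert (0 < a n + t * b n) by (apply H; lia).
      auto_derive; [lra|]. field. lra.
Qed.

Lemma der_Q n a b t : (forall i, (i<n)%nat -> 0 < a i + t * b i) ->
  is_derive (fun s => exp (/ INR n * fsum n (fun i => ln (a i + s * b i)))) t
   (exp (/ INR n * fsum n (fun i => ln (a i + t * b i))) * (/ INR n * fsum n (fun i => b i / (a i + t * b i)))).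
Proof. intros H.
  pose proof (der_sum_ln n a b t H) as D.
  evar (l : R).
  assert (is_derive (fun s => exp (/ INR n * fsum n (fun i => ln (a i + s * b i)))) t l).
  { apply (is_derive_comp exp (fun s => / INR n * fsum n (fun i => ln (a i + s * b i)))).
    - apply is_derive_exp.
    - apply (is_derive_scal (fun s => fsum n (fun i => ln (a i + s * b i)))). exact D. }
  unfold l in H0. simpl in H0. unfold scal in H0; simpl in H0. unfold mult in H0; simpl in H0.
  rewrite Rmult_comm. exact H0.
Qed.

Lemma gap_d n x : (1 <= n)%nat -> (forall i, (i<n)%nat -> 0 < x i <= 1/2) ->
  AM n (compl x) - GM n (compl x) <= AM n x - GM n x /\
  ((exists i j, (i<n)%nat /\ (j<n)%nat /\ x i <> x j) ->
    AM n (compl x) - GM n (compl x) < AM n x - GM n x).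
Proof.
  intros Hn Hx.
  assert (HN : 0 < INR n) by (apply lt_0_INR; lia).
  set (k := fun i => 1/2 - x i).
  assert (Hk : forall i, (i<n)%nat -> 0 <= k i) by (intros i Hi; specialize (Hx i Hi); unfold k; lra).
  set (K := / INR n * fsum n k).
  set (P := fun s => exp (/ INR n * fsum n (fun i => ln (1/2 + s * k i)))
                   - exp (/ INR n * fsum n (fun i => ln (1/2 + s * (- k i)))) - 2 * s * K).
  set (P' := fun s => exp (/ INR n * fsum n (fun i => ln (1/2 + s * k i))) * (/ INR n * fsum n (fun i => k i / (1/2 + s * k i)))
                    - exp (/ INR n * fsum n (fun i => ln (1/2 + s * (- k i)))) * (/ INR n * fsum n (fun i => - k i / (1/2 + s * (- k i))))
                    - 2 * K).
  assert (HD : forall c, 0 <= c <= 1 -> derivable_pt_lim P c (P' c)).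
  { intros c Hc. apply is_derive_Reals.
    assert (H1 : forall i, (i<n)%nat -> 0 < 1/2 + c * k i).
    { intros i Hi. specialize (Hk i Hi). nra. }
    assert (H2 : forall i, (i<n)%nat -> 0 < 1/2 + c * - k i).
    { intros i Hi. specialize (Hx i Hi). unfold k. nra. }
    pose proof (der_Q n (fun _ => 1/2) k c H1) as D1.
    pose proof (der_Q n (fun _ => 1/2) (fun i => - k i) c H2) as D2.
    unfold P, P'.
    apply (is_derive_minus (fun s => exp (/ INR n * fsum n (fun i => ln (1/2 + s * k i)))
                   - exp (/ INR n * fsum n (fun i => ln (1/2 + s * (- k i))))) (fun s => 2 * s * K)).
    - apply (is_derive_minus (fun s => exp (/ INR n * fsum n (fun i => ln (1/2 + s * k i))))
                   (fun s => exp (/ INR n * fsum n (fun i => ln (1/2 + s * (- k i)))))); auto.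
    - auto_derive; auto. ring. }
  destruct (MVT_cor2 P P' 0 1 Rlt_0_1 HD) as [c [Hc1 Hc2]].
  assert (HP0 : P 0 = 0).
  { unfold P. rewrite (fsum_ext n (fun i => ln (1/2 + 0*k i)) (fun _ => ln (1/2))) by (intros; f_equal; ring).
    rewrite (fsum_ext n (fun i => ln (1/2 + 0*(- k i))) (fun _ => ln (1/2))) by (intros; f_equal; ring).
    ring. }
  assert (Hpos1 : forall i, (i<n)%nat -> 0 < compl x i) by (intros i Hi; specialize (Hx i Hi); unfold compl; lra).
  assert (Hpos2 : forall i, (i<n)%nat -> 0 < x i) by (intros i Hi; specialize (Hx i Hi); lra).
  assert (HP1 : P 1 = (AM n x - GM n x) - (AM n (compl x) - GM n (compl x))).
  { unfold P. rewrite (GM_eq n x Hpos2), (GM_eq n (compl x) Hpos1).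
    rewrite (fsum_ext n (fun i => ln (1/2 + 1*k i)) (fun i => ln (compl x i))) by (intros; unfold compl, k; f_equal; field).
    rewrite (fsum_ext n (fun i => ln (1/2 + 1*(- k i))) (fun i => ln (x i))) by (intros; unfold k; f_equal; ring).
    unfold AM, K, k, compl. rewrite !fsum_minus, !fsum_const. field. lra. }
  assert (EQ : P' c = exp (/ INR n * fsum n (fun i => ln (1/2 + c * k i))) * (/ INR n * fsum n (fun i => k i / (1/2 + c * k i)))
      + exp (/ INR n * fsum n (fun i => ln (1/2 - c * k i))) * (/ INR n * fsum n (fun i => k i / (1/2 - c * k i))) - 2 * K).
  { unfold P'. rewrite (fsum_ext n (fun i => ln (1/2 + c * - k i)) (fun i => ln (1/2 - c * k i))) by (intros; f_equal; ring).
    rewrite (fsum_ext n (fun i => - k i / (1/2 + c * - k i)) (fun i => -1 * (k i / (1/2 - c * k i)))).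
    - rewrite fsum_scal. ring.
    - intros. replace (1/2 + c * - k i) with (1/2 - c * k i) by ring. unfold Rdiv. ring. }
  assert (Hm : forall i, (i<n)%nat -> 0 < 1/2 - c * k i).
  { intros i Hi. specialize (Hx i Hi). specialize (Hk i Hi). unfold k in *. nra. }
  destruct (core n k c Hn Hk ltac:(lra) Hm) as [C1 C2].
  fold K in C1, C2.
  assert (E1 : P 1 = P' c) by (replace (P' c) with (P' c * (1 - 0)) by ring; lra).
  split.
  - enough (0 <= P 1) by lra. lra.
  - intros [i [j [Hi [Hj Hne]]]].
    assert (0 < P' c). { rewrite EQ. enough (2 * K <
    exp (/ INR n * fsum n (fun i => ln (1/2 + c * k i))) * (/ INR n * fsum n (fun i => k i / (1/2 + c * k i)))
      + exp (/ INR n * fsum n (fun i => ln (1/2 - c * k i))) * (/ INR n * fsum n (fun i => k i / (1/2 - c * k i)))) by lra.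
      apply C2; [lra|].
      exists i, j. repeat split; auto. unfold k. intro; apply Hne; lra. }
    enough (0 < P 1) by lra. lra.
Qed.

Lemma F1 s t : 0 < s -> s < t -> t < 1 -> t * (- ln (1 - s)) < s * (- ln (1 - t)).
Proof. intros Hs Hst Ht.
  set (p := 1 - s).
  assert (Hp : 0 < p) by (unfold p; lra).
  assert (H1 : ln 1 < ln p + (1 - p)/p) by (apply ln_lt_lin; unfold p; lra).
  rewrite ln_1 in H1.
  assert (H2 : ln (1 - t) <= ln p + ((1 - t) - p)/p) by (apply ln_le_lin; lra).
  set (L1 := ln p) in *. set (L2 := ln (1 - t)) in *.
  set (a := (1 - p)/p) in *. set (b := ((1 - t) - p)/p) in *.
  assert (Z : (t - s) * a + s * b = 0) by (unfold a, b, p; field; lra).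
  assert (H1' : 0 < (t - s) * (L1 + a)) by (apply Rmult_lt_0_compat; lra).
  assert (H2' : s * (L2 - (L1 + b)) <= 0).
  { assert (0 <= s * ((L1 + b) - L2)) by (apply Rmult_le_pos; lra). lra. }
  assert (E : s * L2 - t * L1 = s * (L2 - (L1 + b)) - (t - s) * (L1 + a) + ((t - s) * a + s * b)) by ring.
  fold p. fold L1. lra.
Qed.

Lemma kfun_nonneg r : 0 <= r < 1 -> 0 <= r * (2 - r) / (1 - r) + 2 * ln (1 - r).
Proof. intros Hr.
  set (kf := fun u => u * (2 - u) / (1 - u) + 2 * ln (1 - u)).
  change (0 <= kf r).
  destruct (Req_dec r 0) as [->|Hr0].
  - unfold kf. rewrite !Rminus_0_r, ln_1. lra.
  - assert (HD : forall c, 0 <= c <= r -> derivable_pt_lim kf c (c * c / ((1 - c) * (1 - c)))).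
    { intros c Hc. apply is_derive_Reals. unfold kf.
      auto_derive.
      - lra.
      - field. lra. }
    destruct (MVT_cor2 kf _ 0 r ltac:(lra) HD) as [c [Hc1 Hc2]].
    assert (kf 0 = 0) by (unfold kf; rewrite !Rminus_0_r, ln_1; field).
    assert (0 <= c * c / ((1 - c) * (1 - c)) * (r - 0)).
    { apply Rmult_le_pos; [|lra]. apply Rmult_le_pos; [nra|]. left; apply Rinv_0_lt_compat. nra. }
    lra.
Qed.

Lemma F2 s t : 0 < s -> s <= t -> t < 1 ->
  t * ((2 - s) * (- ln (1 - s))) <= s * ((2 - t) * (- ln (1 - t))).
Proof. intros Hs Hst Ht.
  destruct (Req_dec s t) as [<-|Hne]; [lra|].
  set (phi := fun u => (2 - u) * (- ln (1 - u)) / u).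
  assert (HD : forall c, s <= c <= t -> derivable_pt_lim phi c ((c * (2 - c) / (1 - c) + 2 * ln (1 - c)) / (c * c))).
  { intros c Hc. apply is_derive_Reals. unfold phi.
    auto_derive.
    - lra.
    - replace (ln (1 + - c)) with (ln (1 - c)) by (f_equal; ring). field. lra. }
  destruct (MVT_cor2 phi _ s t ltac:(lra) HD) as [c [Hc1 Hc2]].
  assert (0 <= (c * (2 - c) / (1 - c) + 2 * ln (1 - c)) / (c * c) * (t - s)).
  { apply Rmult_le_pos; [|lra]. apply Rmult_le_pos; [apply kfun_nonneg; lra|].
    left; apply Rinv_0_lt_compat. nra. }
  assert (phi s <= phi t) by lra.
  unfold phi in H0.
  apply (Rmult_le_compat_l (s * t)) in H0; [|nra].
  replace (s * t * ((2 - s) * - ln (1 - s) / s)) with (t * ((2 - s) * - ln (1 - s))) in H0 by (field; lra).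
  replace (s * t * ((2 - t) * - ln (1 - t) / t)) with (s * ((2 - t) * - ln (1 - t))) in H0 by (field; lra).
  exact H0.
Qed.

Lemma amgm_AM n v : (1 <= n)%nat -> (forall i, (i<n)%nat -> 0 < v i) ->
  0 < GM n v /\ GM n v <= AM n v /\
  ((exists i j, (i<n)%nat /\ (j<n)%nat /\ v i <> v j) -> GM n v < AM n v).
Proof. intros Hn Hv. rewrite (GM_eq n v Hv). unfold AM.
  destruct (amgm_gen n v Hn Hv) as [H1 H2].
  replace (fsum n v / INR n) with (/ INR n * fsum n v) by (unfold Rdiv; ring).
  split; [apply exp_pos|]. split; auto. Qed.

Lemma const_GM n v : (1 <= n)%nat -> (forall i, (i<n)%nat -> 0 < v i) ->
  (forall i j, (i<n)%nat -> (j<n)%nat -> v i = v j) -> GM n v = AM n v.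
Proof. intros Hn Hv Hc.
  assert (HN : 0 < INR n) by (apply lt_0_INR; lia).
  rewrite (GM_eq n v Hv). unfold AM.
  rewrite (fsum_ext n (fun i => ln (v i)) (fun _ => ln (v 0%nat))) by (intros; rewrite (Hc i 0%nat); auto; lia).
  rewrite (fsum_ext n v (fun _ => v 0%nat)) by (intros; rewrite (Hc i 0%nat); auto; lia).
  rewrite !fsum_const.
  replace (/ INR n * (INR n * ln (v 0%nat))) with (ln (v 0%nat)) by (field; lra).
  rewrite exp_ln by (apply Hv; lia). field. lra.
Qed.

Lemma Rpower_1_base y : Rpower 1 y = 1.
Proof. unfold Rpower. rewrite ln_1, Rmult_0_r. apply exp_0. Qed.

Lemma ln_ratio A G : 0 < G -> G < A -> ln (A / G) = - ln (1 - (1 - G / A)).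
Proof. intros HG HGA.
  replace (1 - (1 - G / A)) with (/ (A / G)) by (field; lra).
  rewrite ln_Rinv; [ring|]. apply Rdiv_lt_0_compat; lra. Qed.

Lemma ln_pos_gt r : 0 < r < 1 -> 0 < - ln (1 - r).
Proof. intros Hr. assert (ln (1 - r) < ln 1) by (apply ln_increasing; lra). rewrite ln_1 in H. lra. Qed.

Lemma final_strict A G A' G' : 0 < G -> G < A -> A <= A' -> 0 < G' -> G' < A' ->
  A' - G' < A - G ->
  (A' + G') * ln (A' / G') < (A + G) * ln (A / G) /\
  (A - G) * ln (A' / G') < (A' - G') * ln (A / G).
Proof. intros HG HGA HAA HG' HGA' Hd.
  set (u := 1 - G / A). set (u' := 1 - G' / A').
  assert (Hu : 0 < u < 1).
  { unfold u. split.
    - assert (G / A < 1) by (apply (Rmult_lt_reg_r A); [lra|]; unfold Rdiv; rewrite Rmult_assoc, Rinv_l; lra). lra.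
    - assert (0 < G / A) by (apply Rdiv_lt_0_compat; lra). lra. }
  assert (Hu' : 0 < u' < 1).
  { unfold u'. split.
    - assert (G' / A' < 1) by (apply (Rmult_lt_reg_r A'); [lra|]; unfold Rdiv; rewrite Rmult_assoc, Rinv_l; lra). lra.
    - assert (0 < G' / A') by (apply Rdiv_lt_0_compat; lra). lra. }
  assert (Ed : A - G = A * u) by (unfold u; field; lra).
  assert (Ed' : A' - G' = A' * u') by (unfold u'; field; lra).
  assert (Huu : u' < u).
  { apply (Rmult_lt_reg_l (A * A')); [nra|].
    assert (A * (A' * u') <= A' * (A' * u')) by (apply Rmult_le_compat_r; nra).
    assert (A * (A' * u') < A * (A * u)) by (apply Rmult_lt_compat_l; lra). nra. }
  rewrite (ln_ratio A G), (ln_ratio A' G') by lra. fold u u'.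
  pose proof (ln_pos_gt u Hu) as LU. pose proof (ln_pos_gt u' Hu') as LU'.
  set (L := - ln (1 - u)) in *. set (L' := - ln (1 - u')) in *.
  split.
  - pose proof (F2 u' u ltac:(lra) ltac:(lra) ltac:(lra)) as HF. fold L L' in HF.
    assert (EA : A + G = A * (2 - u)) by (unfold u; field; lra).
    assert (EA' : A' + G' = A' * (2 - u')) by (unfold u'; field; lra).
    rewrite EA, EA'.
    set (X := (2 - u) * L) in *. set (X' := (2 - u') * L') in *.
    assert (HX' : 0 < u * X') by (unfold X'; apply Rmult_lt_0_compat; [lra|]; apply Rmult_lt_0_compat; lra).
    apply (Rmult_lt_reg_l (u * u')); [nra|].
    replace (u * u' * (A' * (2 - u') * L')) with ((A' * u') * (u * X')) by (unfold X'; ring).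
    replace (u * u' * (A * (2 - u) * L)) with ((A * u) * (u' * X)) by (unfold X; ring).
    rewrite <- Ed, <- Ed'.
    assert ((A' - G') * (u * X') < (A - G) * (u * X')) by (apply Rmult_lt_compat_r; lra).
    assert ((A - G) * (u * X') <= (A - G) * (u' * X)) by (apply Rmult_le_compat_l; lra).
    lra.
  - pose proof (F1 u' u ltac:(lra) ltac:(lra) ltac:(lra)) as HF. fold L L' in HF.
    rewrite Ed, Ed'.
    assert (A * (u * L') < A * (u' * L)) by (apply Rmult_lt_compat_l; lra).
    assert (A * (u' * L) <= A' * (u' * L)) by (apply Rmult_le_compat_r; nra).
    nra.
Qed.

Theorem mainTheorem7 (n : nat) (x : nat -> R) :
  (1 <= n)%nat ->
  (forall i, (i < n)%nat -> 0 < x i <= 1/2) ->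
  let A := AM n x in let G := GM n x in
  let A' := AM n (compl x) in let G' := GM n (compl x) in
  (Rpower (A' / G') (A' + G') <= Rpower (A / G) (A + G) /\
   (Rpower (A' / G') (A' + G') = Rpower (A / G) (A + G) <->
      (forall i j, (i < n)%nat -> (j < n)%nat -> x i = x j))) /\
  (Rpower (A' / G') (A - G) <= Rpower (A / G) (A' - G') /\
   (Rpower (A' / G') (A - G) = Rpower (A / G) (A' - G') <->
      (forall i j, (i < n)%nat -> (j < n)%nat -> x i = x j))).
Proof.
  intros Hn Hx A G A' G'.
  assert (HN : 0 < INR n) by (apply lt_0_INR; lia).
  assert (Hp1 : forall i, (i<n)%nat -> 0 < x i) by (intros i Hi; specialize (Hx i Hi); lra).
  assert (Hp2 : forall i, (i<n)%nat -> 0 < compl x i) by (intros i Hi; specialize (Hx i Hi); unfold compl; lra).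
  destruct (classic (forall i j, (i < n)%nat -> (j < n)%nat -> x i = x j)) as [Hc|Hnc].
  - assert (E1 : G = A) by (apply const_GM; auto).
    assert (E2 : G' = A').
    { apply const_GM; auto. intros i j Hi Hj. unfold compl. rewrite (Hc i j); auto. }
    assert (HA : 0 < A) by (rewrite <- E1; destruct (amgm_AM n x Hn Hp1) as [H _]; exact H).
    assert (HA' : 0 < A') by (rewrite <- E2; destruct (amgm_AM n (compl x) Hn Hp2) as [H _]; exact H).
    rewrite E1, E2. replace (A / A) with 1 by (field; lra). replace (A' / A') with 1 by (field; lra).
    rewrite !Rpower_1_base. split; split; try lra; split; auto.
  - assert (Hex : exists i j, (i<n)%nat /\ (j<n)%nat /\ x i <> x j).
    { apply NNPP. intro H. apply Hnc. intros i j Hi Hj. apply NNPP. intro Hne.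
      apply H. exists i, j. auto. }
    assert (Hex' : exists i j, (i<n)%nat /\ (j<n)%nat /\ compl x i <> compl x j).
    { destruct Hex as [i [j [Hi [Hj Hne]]]]. exists i, j. repeat split; auto. unfold compl. intro; apply Hne; lra. }
    destruct (amgm_AM n x Hn Hp1) as [G0 [_ GA]]. specialize (GA Hex).
    destruct (amgm_AM n (compl x) Hn Hp2) as [G0' [_ GA']]. specialize (GA' Hex').
    destruct (gap_d n x Hn Hx) as [_ Hd]. specialize (Hd Hex).
    fold A G A' G' in G0, GA, G0', GA', Hd.
    assert (HAA : A <= A').
    { unfold A, A', AM, compl. rewrite fsum_minus, fsum_const.
      assert (fsum n x <= fsum n (fun _ => 1/2)) by (apply fsum_le; intros i Hi; specialize (Hx i Hi); lra).
      rewrite fsum_const in H. apply (Rmult_le_reg_r (INR n)); auto. unfold Rdiv.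
      rewrite !Rmult_assoc, Rinv_l by lra. lra. }
    destruct (final_strict A G A' G' G0 GA HAA G0' GA' Hd) as [S1 S2].
    assert (R1 : Rpower (A' / G') (A' + G') < Rpower (A / G) (A + G)).
    { unfold Rpower. apply exp_increasing. exact S1. }
    assert (R2 : Rpower (A' / G') (A - G) < Rpower (A / G) (A' - G')).
    { unfold Rpower. apply exp_increasing. lra. }
    split; split; try lra; split; intro H; try lra; exfalso; apply Hnc; exact H.
Qed.
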